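(* Let $\mu$ be a growth rate and let $V$ be a Lyapunov function for $x'=A(t)x$ such that $|V(\tau,x)|\le C\mu(\tau)^{\mathrm{sign}(\tau)\epsilon}\|x\|$ for all $(\tau,x)$, for some $C>0,\epsilon\ge0$. Let $\mathcal{G}^s_\tau\subset\mathcal{E}^s_\tau$ and $\mathcal{G}^u_\tau\subset\mathcal{E}^u_\tau$ ($\tau\in\mathbb{R}$) be subspaces with $\Psi(t,\tau)\mathcal{G}^s_\tau=\mathcal{G}^s_t$ and $\Psi(t,\tau)\mathcal{G}^u_\tau=\mathcal{G}^u_t$ for all $t,\tau$. Suppose there are $\alpha<0$, $\beta<0$ such that for each $\tau$: (1) for $x\in\mathcal{G}^u_\tau$ and $t\ge\tau$, $V(t,\Psi(t,\tau)x)\ge(\mu(\tau)/\mu(t))^\alpha V(\tau,x)$; (2) for $x\in\mathcal{G}^s_\tau$ and $t\ge\tau$, $|V(t,\Psi(t,\tau)x)|\le(\mu(t)/\mu(\tau))^\beta|V(\tau,x)|$; (3) for $x\in\mathcal{G}^s_\tau\cup\mathcal{G}^u_\tau$, $|V(\tau,x)|\ge\mu(\tau)^{-\mathrm{sign}(\tau)\epsilon}\|x\|/C$. Then for all $t\ge\tau$, $$\|\Psi(t,\tau)|_{\mathcal{G}^s_\tau}\|\le C^2\Big(\frac{\mu(t)}{\mu(\tau)}\Big)^{\beta+\mathrm{sign}(t)\epsilon}\mu(\tau)^{2\mathrm{sign}(\tau)\epsilon},\qquad \|\Psi(t,\tau)^{-1}|_{\mathcal{G}^u_t}\|\le C^2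\Big(\frac{\mu(\tau)}{\mu(t)}\Big)^{-\alpha+\mathrm{sign}(\tau)\epsilon}\mu(t)^{2\mathrm{sign}(t)\epsilon}.$$
   Context: Growth rate: strictly increasing $\mu:\mathbb{R}\to(0,\infty)$, $\mu(0)=1$, $\mu\to\infty$ at $+\infty$, $\mu\to0$ at $-\infty$. $A(t)\in GL(n,\mathbb{R})$ locally integrable, evolution operator $\Psi(t,s)$. Cones $\mathcal{C}^u(W)=\{0\}\cup W^{-1}(0,\infty)$, $\mathcal{C}^s(W)=\{0\}\cup W^{-1}(-\infty,0)$. A continuous $V:\mathbb{R}\times\mathbb{R}^n\to\mathbb{R}$, $V_t=V(t,\cdot)$, is a Lyapunov function if there are $d_s+d_u=n$ with $d_u,d_s$ the maximal dimensions of linear subspaces inside $\mathcal{C}^u(V_\tau),\mathcal{C}^s(V_\tau)$ for each $\tau$, and $V(t,\Psi(t,\tau)x)\ge V(\tau,x)$ for all $t\ge\tau$, $x$. $\mathcal{E}^u_\tau=\bigcap_{t}\Psi(\tau,t)\overline{\mathcal{C}^u(V_t)}$, $\mathcal{E}^s_\tau=\bigcap_t\Psi(\tau,t)\overline{\mathcal{C}^s(V_t)}$. *)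

(* Defs.v *)
From HB Require Import structures.
From mathcomp Require Import all_boot all_order all_algebra.
From mathcomp Require Import all_classical all_reals all_analysis.
Set Implicit Arguments. Unset Strict Implicit. Unset Printing Implicit Defensive.
Import Order.TTheory GRing.Theory Num.Theory.
Import numFieldNormedType.Exports.
Local Open Scope classical_set_scope.
Local Open Scope ring_scope.

Section Defs.
Variable R : realType.
Variable n : nat.

Definition enorm (x : 'cV[R]_n) : R := Num.sqrt (\sum_(i < n) x i 0 ^+ 2).

Definition growth_rate (mu : R -> R) : Prop :=
  [/\ {homo mu : x y / x < y},
      (forall x, 0 < mu x),
      mu 0 = 1,
      (mu x @[x --> +oo] --> +oo) &
      (mu x @[x --> -oo] --> 0)].

Definition locally_integrable_GL (A : R -> 'M[R]_n) : Prop :=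
  (forall t, A t \in unitmx) /\
  (forall (a b : R) (i j : 'I_n),
      (@lebesgue_measure R).-integrable `[a, b] (EFin \o (fun u => A u i j))).

Definition evolution_operator (A : R -> 'M[R]_n) (Psi : R -> R -> 'M[R]_n) : Prop :=
  [/\ (forall t, Psi t t = 1%:M),
      (forall t s r, Psi t s *m Psi s r = Psi t r) &
      (forall s t, s <= t -> forall i j : 'I_n,
          (@lebesgue_measure R).-integrable `[s, t]
              (EFin \o (fun u => (A u *m Psi u s) i j)) /\
          Psi t s i j = (i == j)%:R +
              Rintegral (@lebesgue_measure R) `[s, t]
                        (fun u => (A u *m Psi u s) i j))].

Definition cone_u (W : 'cV[R]_n -> R) : set 'cV[R]_n :=
  [set x | x = 0 \/ 0 < W x].
Definition cone_s (W : 'cV[R]_n -> R) : set 'cV[R]_n :=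
  [set x | x = 0 \/ W x < 0].

(* d = maximal dimension of a linear subspace contained in the set K:
   some subspace of dimension d (column space of a rank-d matrix) lies in K,
   and every subspace (column space of some M) lying in K has dimension <= d. *)
Definition max_subspace_dim (K : set 'cV[R]_n) (d : nat) : Prop :=
  (exists M : 'M[R]_(n, d), \rank M = d /\ forall c : 'cV[R]_d, K (M *m c)) /\
  (forall (k : nat) (M : 'M[R]_(n, k)),
      (forall c : 'cV[R]_k, K (M *m c)) -> (\rank M <= d)%N).

Definition lyapunov_function (Psi : R -> R -> 'M[R]_n)
    (V : R -> 'cV[R]_n -> R) : Prop :=
  continuous (fun p : R * 'cV[R]_n => V p.1 p.2) /\
  (exists ds du : nat, (ds + du)%N = n /\
     forall tau, max_subspace_dim (cone_u (V tau)) du /\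
                 max_subspace_dim (cone_s (V tau)) ds) /\
  (forall tau t x, tau <= t -> V tau x <= V t (Psi t tau *m x)).

Definition E_u (Psi : R -> R -> 'M[R]_n) (V : R -> 'cV[R]_n -> R) (tau : R)
  : set 'cV[R]_n :=
  \bigcap_(t in [set: R]) ((fun x => Psi tau t *m x) @` closure (cone_u (V t))).
Definition E_s (Psi : R -> R -> 'M[R]_n) (V : R -> 'cV[R]_n -> R) (tau : R)
  : set 'cV[R]_n :=
  \bigcap_(t in [set: R]) ((fun x => Psi tau t *m x) @` closure (cone_s (V t))).

Definition linear_subspace (G : set 'cV[R]_n) : Prop :=
  G 0 /\ forall (a : R) x y, G x -> G y -> G (a *: x + y).

Definition restr_opnorm (M : 'M[R]_n) (G : set 'cV[R]_n) : R :=
  sup [set enorm (M *m x) | x in [set x | G x /\ enorm x <= 1]].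

End Defs.

(* Main.v *)
Require Import Defs.
From HB Require Import structures.
From mathcomp Require Import all_boot all_order all_algebra.
From mathcomp Require Import all_classical all_reals all_analysis.
From mathcomp Require Import ring lra.
Import Order.TTheory GRing.Theory Num.Theory.
Import numFieldNormedType.Exports.
Local Open Scope classical_set_scope.
Local Open Scope ring_scope.

Lemma contsec (R : realType) (X : topologicalType) (f : R -> X -> R) (a : R) :
  continuous (fun p : R * X => f p.1 p.2) -> continuous (f a).
Proof.
move=> H x.
have hp : {for x, continuous (fun y : X => (a, y))}.
  exact: (@cvg_pair _ _ _ (nbhs x) (nbhs a) (nbhs x) _ _ _ (fun=> a) id (cvg_cst a) cvg_id).
have := continuous_comp hp (H (a, x)). by [].
Qed.

Lemma clos_ge (R : realType) (X : topologicalType) (g : X -> R) (A : set X) :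
  continuous g -> A `<=` [set x | 0 <= g x] -> closure A `<=` [set x | 0 <= g x].
Proof.
move=> Hg HA; rewrite closureE; apply: smallest_sub => //.
have -> : [set x | 0 <= g x] = g @^-1` [set r | 0 <= r] by [].
by apply: (proj1 (continuous_closedP g)) => //; exact: closed_ge.
Qed.

Lemma enorm0 (R : realType) (n : nat) : enorm (0 : 'cV[R]_n) = 0.
Proof.
rewrite /enorm big1 ?sqrtr0 // => i _; rewrite mxE expr2 mul0r //.
Qed.

Lemma enorm_ge0 (R : realType) (n : nat) (x : 'cV[R]_n) : 0 <= enorm x.
Proof. exact: sqrtr_ge0. Qed.

Lemma supb (R : realType) (n : nat) (M : 'M[R]_n) (G : set 'cV[R]_n) (K : R) :
  G 0 -> (forall x, G x -> enorm x <= 1 -> enorm (M *m x) <= K) ->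
  restr_opnorm M G <= K.
Proof.
move=> G0 HK; apply: ge_sup.
  exists (enorm (M *m 0)); exists 0 => //; split => //; rewrite enorm0 ler01 //.
by move=> _ [x [Gx ex] <-]; exact: HK.
Qed.

Lemma pw (R : realType) (a r : R) : 0 < a -> a `^ r = expR (r * ln a).
Proof. by move=> a0; rewrite /powR gt_eqF. Qed.

Lemma sgL1 (R : realType) (mu : R -> R) : growth_rate mu ->
  forall tau t, tau <= t -> 0 <= ln (mu tau) * (Num.sg tau - Num.sg t).
Proof.
move=> [inc pos mu0 _ _] tau t le.
case: (ltrgt0P tau) => htau.
- have ht : 0 < t by apply: (lt_le_trans htau).
  by rewrite !gtr0_sg // subrr mulr0.
- have hl : ln (mu tau) < 0.
    apply: ln_lt0; rewrite pos /= -mu0; exact: inc.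
  rewrite (ltr0_sg htau).
  case: (ltrgt0P t) => ht.
  + rewrite (gtr0_sg ht); nra.
  + rewrite (ltr0_sg ht); nra.
  + rewrite ht sgr0; nra.
- by rewrite htau mu0 ln1 mul0r.
Qed.

Lemma sgL2 (R : realType) (mu : R -> R) : growth_rate mu ->
  forall tau t, tau <= t -> 0 <= ln (mu t) * (Num.sg t - Num.sg tau).
Proof.
move=> [inc pos mu0 _ _] tau t le.
case: (ltrgt0P t) => ht.
- have hl : 0 < ln (mu t).
    apply: ln_gt0; rewrite -mu0; exact: inc.
  rewrite (gtr0_sg ht).
  case: (ltrgt0P tau) => h.
  + rewrite (gtr0_sg h); nra.
  + rewrite (ltr0_sg h); nra.
  + rewrite h sgr0; nra.
- have h : tau < 0 by apply: (le_lt_trans le).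
  by rewrite !ltr0_sg // subrr mulr0.
- by rewrite ht mu0 ln1 mul0r.
Qed.

Theorem mainTheorem9 (R : realType) (n : nat) (mu : R -> R)
  (A : R -> 'M[R]_n) (Psi : R -> R -> 'M[R]_n) (V : R -> 'cV[R]_n -> R)
  (C eps alpha beta : R) (Gs Gu : R -> set 'cV[R]_n) :
  growth_rate mu ->
  locally_integrable_GL A ->
  evolution_operator A Psi ->
  lyapunov_function Psi V ->
  0 < C -> 0 <= eps ->
  (forall tau x, `|V tau x| <= C * mu tau `^ (Num.sg tau * eps) * enorm x) ->
  (forall tau, linear_subspace (Gs tau) /\ linear_subspace (Gu tau)) ->
  (forall tau, Gs tau `<=` E_s Psi V tau) ->
  (forall tau, Gu tau `<=` E_u Psi V tau) ->
  (forall t tau, (fun x => Psi t tau *m x) @` Gs tau = Gs t) ->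
  (forall t tau, (fun x => Psi t tau *m x) @` Gu tau = Gu t) ->
  alpha < 0 -> beta < 0 ->
  (forall tau t x, Gu tau x -> tau <= t ->
      V t (Psi t tau *m x) >= (mu tau / mu t) `^ alpha * V tau x) ->
  (forall tau t x, Gs tau x -> tau <= t ->
      `|V t (Psi t tau *m x)| <= (mu t / mu tau) `^ beta * `|V tau x|) ->
  (forall tau x, Gs tau x \/ Gu tau x ->
      `|V tau x| >= mu tau `^ (- (Num.sg tau * eps)) * enorm x / C) ->
  forall t tau, tau <= t ->
    restr_opnorm (Psi t tau) (Gs tau) <=
      C ^+ 2 * (mu t / mu tau) `^ (beta + Num.sg t * eps)
             * mu tau `^ (2 * Num.sg tau * eps)
    /\
    restr_opnorm (invmx (Psi t tau)) (Gu t) <=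
      C ^+ 2 * (mu tau / mu t) `^ (- alpha + Num.sg tau * eps)
             * mu t `^ (2 * Num.sg t * eps).
Proof.
move=> gr _ [Psi_id Psi_co _] [Vcont _] C0 eps0 Vb Glin Gs_E Gu_E Gs_inv Gu_inv
  alpha0 beta0 Hu Hs Hlow t tau tle.
have gr' := gr; case: gr' => [_ mu_pos _ _ _].
pose L s := ln (mu s).
have pws s r : mu s `^ r = expR (r * L s) by exact: pw.
have pwq s s' r : (mu s / mu s') `^ r = expR (r * (L s - L s')).
  rewrite pw ?divr_gt0 //; congr (expR (_ * _)).
  by rewrite /L ln_div // posrE.
have lowb s y : Gs s y \/ Gu s y ->
    enorm y <= C * expR (Num.sg s * eps * L s) * `|V s y|.
  move=> Hy; have h := Hlow s y Hy; rewrite pws mulNr expRN in h.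
  set E := expR _ in h *; have E0 : 0 < E by exact: expR_gt0.
  have -> : enorm y = (E^-1 * enorm y / C) * (C * E).
    by field; rewrite ?gt_eqF.
  rewrite [C * E * _]mulrC; apply: ler_wpM2r => //.
  by rewrite mulr_ge0 // ltW.
have upb s y : `|V s y| <= C * expR (Num.sg s * eps * L s) * enorm y.
  by rewrite -pws; exact: Vb.
split.
  apply: supb; first by case: (Glin tau) => [[]].
  move=> x Gx ex.
  set y := Psi t tau *m x.
  have Gy : Gs t y by rewrite -(Gs_inv t tau); exists x.
  have h1 := lowb t y (or_introl Gy).
  have h2 := Hs tau t x Gx tle; rewrite pwq -/y in h2.
  have h3 := upb tau x.
  rewrite pwq pws.
  have k := @sgL1 _ _ gr _ _ tle.
  have k' : 0 <= eps * (L tau * (Num.sg tau - Num.sg t)) by rewrite mulr_ge0.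
  apply: (le_trans h1).
  apply: (@le_trans _ _ (C * expR (Num.sg t * eps * L t) *
     (expR (beta * (L t - L tau)) * (C * expR (Num.sg tau * eps * L tau) * enorm x)))).
    apply: ler_wpM2l; first by rewrite mulr_ge0 ?expR_ge0 ?ltW.
    apply: (le_trans h2); apply: ler_wpM2l; rewrite ?expR_ge0 //.
  have -> : C * expR (Num.sg t * eps * L t) *
     (expR (beta * (L t - L tau)) * (C * expR (Num.sg tau * eps * L tau) * enorm x))
     = C ^+ 2 * expR (Num.sg t * eps * L t + beta * (L t - L tau)
          + Num.sg tau * eps * L tau) * enorm x.
    by rewrite !expRD; ring.
  rewrite -[X in _ <= X]mulrA -expRD.
  apply: (@le_trans _ _ (C ^+ 2 * expR (Num.sg t * eps * L t + beta * (L t - L tau)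
          + Num.sg tau * eps * L tau) * 1)).
    by apply: ler_wpM2l => //; rewrite ?mulr_ge0 ?expR_ge0 ?exprn_ge0 ?ltW.
  rewrite mulr1; apply: ler_wpM2l; first by rewrite exprn_ge0 ?ltW.
  rewrite ler_expR.
  rewrite -subr_ge0.
  have -> : (beta + Num.sg t * eps) * (L t - L tau) + 2 * Num.sg tau * eps * L tau -
    (Num.sg t * eps * L t + beta * (L t - L tau) + Num.sg tau * eps * L tau)
    = eps * (L tau * (Num.sg tau - Num.sg t)) by ring.
  exact: k'.
have PQ : Psi t tau *m Psi tau t = 1%:M by rewrite Psi_co Psi_id.
have [Pu _] := mulmx1_unit PQ.
have inv : invmx (Psi t tau) = Psi tau t.
  by rewrite -[invmx _]mulmx1 -PQ mulmxA mulVmx // mul1mx.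
rewrite inv; apply: supb; first by case: (Glin t) => _ [].
move=> y Gy ey.
set x := Psi tau t *m y.
have Gx : Gu tau x by rewrite -(Gu_inv tau t); exists y.
have Pxy : Psi t tau *m x = y by rewrite /x mulmxA PQ mul1mx.
have Vx0 : 0 <= V tau x.
  have := Gu_E tau x Gx tau I; case=> w Hw Hwx.
  rewrite Psi_id mul1mx in Hwx; rewrite -Hwx.
  have hc := @contsec _ _ V tau Vcont.
  apply: (@clos_ge _ _ (V tau) (cone_u (V tau)) hc _ w Hw) => z [->|/ltW //].
  rewrite /=; suff -> : V tau 0 = 0 by [].
  by apply/eqP; rewrite -normr_le0; have := Vb tau 0; rewrite enorm0 mulr0.
have hu := Hu tau t x Gx tle; rewrite Pxy pwq in hu.
have low := lowb tau x (or_intror Gx).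
have h3 := upb t y.
rewrite ger0_norm // in low.
have hv : V tau x <= expR (- (alpha * (L tau - L t))) * `|V t y|.
  have -> : V tau x = expR (- (alpha * (L tau - L t))) *
      (expR (alpha * (L tau - L t)) * V tau x).
    by rewrite mulrA -expRD addNr expR0 mul1r.
  apply: ler_wpM2l; first exact: expR_ge0.
  exact: (le_trans hu (ler_norm _)).
have k := @sgL2 _ _ gr _ _ tle.
have k' : 0 <= eps * (L t * (Num.sg t - Num.sg tau)) by rewrite mulr_ge0.
rewrite pwq pws.
apply: (le_trans low).
apply: (@le_trans _ _ (C * expR (Num.sg tau * eps * L tau) *
   (expR (- (alpha * (L tau - L t))) * (C * expR (Num.sg t * eps * L t) * enorm y)))).
  apply: ler_wpM2l; first by rewrite mulr_ge0 ?expR_ge0 ?ltW.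
  apply: (le_trans hv); apply: ler_wpM2l; rewrite ?expR_ge0 //.
have -> : C * expR (Num.sg tau * eps * L tau) *
   (expR (- (alpha * (L tau - L t))) * (C * expR (Num.sg t * eps * L t) * enorm y))
   = C ^+ 2 * expR (Num.sg tau * eps * L tau + - (alpha * (L tau - L t))
        + Num.sg t * eps * L t) * enorm y.
  by rewrite !expRD; ring.
rewrite -[X in _ <= X]mulrA -expRD.
apply: (@le_trans _ _ (C ^+ 2 * expR (Num.sg tau * eps * L tau + - (alpha * (L tau - L t))
        + Num.sg t * eps * L t) * 1)).
  by apply: ler_wpM2l => //; rewrite ?mulr_ge0 ?expR_ge0 ?exprn_ge0 ?ltW.
rewrite mulr1; apply: ler_wpM2l; first by rewrite exprn_ge0 ?ltW.
rewrite ler_expR -subr_ge0.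
have -> : (- alpha + Num.sg tau * eps) * (L tau - L t) + 2 * Num.sg t * eps * L t -
  (Num.sg tau * eps * L tau + - (alpha * (L tau - L t)) + Num.sg t * eps * L t)
  = eps * (L t * (Num.sg t - Num.sg tau)) by ring.
exact: k'.
Qed.
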